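(* Let $p\equiv 1\pmod 4$ be a prime and $\ell\ge 2$ an integer, and put $d=\ell(\ell-1)/2$. Let $Y_0\subset \mathbb{A}^\ell\times\mathbb{A}^d$ be the set of points $(r_1,\ldots,r_\ell,(y_{ij})_{1\le j<i\le \ell})$ satisfying $$r_i-r_j=y_{ij}^2\quad (1\le j<i\le \ell),\qquad y_{ij}\ne 0 \text{ for all } 1\le j<i\le\ell.$$ Then $$n_p(K_\ell)=2^{-d}(\ell!)^{-1}p^{-1}\,|Y_0(\mathbb{F}_p)|.$$
   Context: For $p\equiv 1\pmod 4$ and an $\ell$-tuple $A=(r_1,\ldots,r_\ell)$ of pairwise distinct residues modulo $p$, let $\Gamma_A$ be the graph on vertices $v_1,\ldots,v_\ell$ with $v_i,v_j$ joined by an edge iff $r_i-r_j$ is a nonzero quadratic residue mod $p$ (symmetric since $-1$ is a square). Two tuples are identified if they differ by a permutation of entries or by adding the same residue $a$ to all entries. For a graph $\Gamma$ on $\ell$ vertices, $n_p(\Gamma)$ is the number of such classes of tuples $A$ with $\Gamma_A$ isomorphic to $\Gamma$. $K_\ell$ is the complete graph on $\ell$ vertices. *)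

(* Defs.v *)
From HB Require Import structures.
From mathcomp Require Import all_boot all_order all_algebra all_fingroup.
Set Implicit Arguments. Unset Strict Implicit. Unset Printing Implicit Defensive.
Import GRing.Theory.
Local Open Scope ring_scope.

Definition nzsq (p : nat) (x : 'F_p) : bool := (x != 0) && [exists z : 'F_p, z ^+ 2 == x].

(* a simple graph on vertex set 'I_l, given by its adjacency relation *)
Definition graph_iso (l : nat) (G H : rel 'I_l) : bool :=
  [exists s : {perm 'I_l}, [forall i, [forall j, G i j == H (s i) (s j)]]].

Definition GammaA (p l : nat) (A : {ffun 'I_l -> 'F_p}) : rel 'I_l :=
  fun i j => nzsq (A i - A j).

Definition Kgraph (l : nat) : rel 'I_l := fun i j => i != j.

Definition tuple_equiv (p l : nat) (A B : {ffun 'I_l -> 'F_p}) : bool :=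
  [exists s : {perm 'I_l}, exists a : 'F_p, [forall i, B i == A (s i) + a]].

Definition admissible (p l : nat) (G : rel 'I_l) : {set {ffun 'I_l -> 'F_p}} :=
  [set A : {ffun 'I_l -> 'F_p} | injectiveb A &
     graph_iso (GammaA A) G].

Definition n_p (p l : nat) (G : rel 'I_l) : nat :=
  #|[set [set B in admissible p G | tuple_equiv A B] | A in admissible p G]|.

Definition pairs_lt (l : nat) := {ij : 'I_l * 'I_l | (ij.2 < ij.1)%N}.

Definition Y0 (p l : nat) : {set {ffun 'I_l -> 'F_p} * {ffun pairs_lt l -> 'F_p}} :=
  [set ry : {ffun 'I_l -> 'F_p} * {ffun pairs_lt l -> 'F_p} |
     [forall ij : pairs_lt l,
     (ry.1 (val ij).1 - ry.1 (val ij).2 == ry.2 ij ^+ 2) && (ry.2 ij != 0)]].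

(* Main.v *)
Require Import Defs.
From HB Require Import structures.
From mathcomp Require Import all_boot all_order all_algebra all_fingroup all_solvable all_field.
From mathcomp Require Import zify ring.
Set Implicit Arguments. Unset Strict Implicit. Unset Printing Implicit Defensive.
Import GRing.Theory Num.Theory.
Local Open Scope ring_scope.

Lemma Fp_facts (p : nat) : prime p -> (p %% 4 = 1)%N ->
  (exists c : 'F_p, c ^+ 2 = -1) /\ (exists z : 'F_p, z != 0 /\ forall w : 'F_p, w ^+ 2 != z).
Proof.
move=> pr p4.
have cF : #|'F_p| = p by rewrite card_Fp.
set n := p.-1.
have p1 : (1 < p)%N by apply: prime_gt1.
have Hn : forall x : 'F_p, x != 0 -> x ^+ n = 1.
  move=> x x0.
  have : x ^+ n.+1 = x by rewrite /n prednK ?prime_gt0 // -[X in x ^+ X]cF expf_card.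
  rewrite exprSr => h; apply: (mulIf x0); rewrite mul1r; exact: h.
have /hasP [z zin zpr] : has n.-primitive_root (enum (predC1 (0 : 'F_p))).
  apply: has_prim_root.
  - rewrite /n; lia.
  - apply/allP => x; rewrite mem_enum /= => x0; rewrite unity_rootE Hn //.
  - exact: enum_uniq.
  - by rewrite -cardE cardC1 cF.
have z0 : z != 0 by move: zin; rewrite mem_enum.
have n4 : n = (4 * (n %/ 4))%N by rewrite /n; lia.
set k := (n %/ 4)%N in n4.
have k0 : (0 < k)%N by rewrite /k /n; lia.
split.
  exists (z ^+ k); apply/eqP.
  have : (z ^+ k) ^+ 2 ^+ 2 == 1.
    by rewrite -!exprM (_ : (k * (2 * 2) = n)%N) ?(prim_expr_order zpr) // n4; lia.
  rewrite sqrf_eq1 => /orP [] // h.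
  move: h; rewrite -exprM -(prim_order_dvd zpr) n4; move/dvdnP => [m hm].
  clearbody k; case: m hm => [|m] hm; nia.
exists z; split => // w; apply/negP => /eqP hw.
have w0 : w != 0 by apply: contraNneq z0 => w0; rewrite -hw w0 expr0n.
have : z ^+ (2 * k) == 1.
  rewrite -hw -exprM (_ : (2 * (2 * k) = n)%N) ?Hn //; rewrite n4; lia.
rewrite -(prim_order_dvd zpr) n4; move/dvdnP => [m hm].
  clearbody k; case: m hm => [|m] hm; nia.
Qed.

Definition shiftf (p l : nat) (A : {ffun 'I_l -> 'F_p}) (sa : {perm 'I_l} * 'F_p)
  : {ffun 'I_l -> 'F_p} := [ffun i => A (sa.1 i) + sa.2].

Lemma admP (p l : nat) (A : {ffun 'I_l -> 'F_p}) :
  reflect (forall i j, i != j -> nzsq (A i - A j)) (A \in admissible p (@Kgraph l)).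
Proof.
rewrite inE; apply: (iffP andP).
- case=> _ /existsP [s /forallP H] i j ij.
  have := H i => /forallP /(_ j) /eqP.
  rewrite /GammaA /Kgraph (inj_eq perm_inj) => ->; exact: ij.
- move=> H; split.
  + apply/injectiveP => i j Aij; apply/eqP; apply: contraT => ij.
    by have := H i j ij; rewrite Aij subrr /nzsq eqxx.
  + apply/existsP; exists 1%g; apply/forallP => i; apply/forallP => j.
    rewrite !perm1 /GammaA /Kgraph; case: (eqVneq i j) => [->|ij].
      by rewrite subrr /nzsq eqxx.
    by rewrite H.
Qed.

Lemma teqP (p l : nat) (A B : {ffun 'I_l -> 'F_p}) :
  reflect (exists s a, B = shiftf A (s, a)) (tuple_equiv A B).
Proof.
apply: (iffP existsP) => [[s /existsP [a /forallP H]]|[s [a ->]]].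
  by exists s, a; apply/ffunP => i; rewrite ffunE; apply/eqP.
by exists s; apply/existsP; exists a; apply/forallP => i; rewrite ffunE.
Qed.

Lemma shiftf_comp (p l : nat) (A : {ffun 'I_l -> 'F_p}) s a t b :
  shiftf (shiftf A (s, a)) (t, b) = shiftf A ((t * s)%g, a + b).
Proof. by apply/ffunP => i; rewrite !ffunE /= permM addrA. Qed.

Lemma shiftf_id (p l : nat) (A : {ffun 'I_l -> 'F_p}) : shiftf A (1%g, 0) = A.
Proof. by apply/ffunP => i; rewrite !ffunE /= perm1 addr0. Qed.

Lemma teq_equiv (p l : nat) : equivalence_rel (@tuple_equiv p l).
Proof.
move=> x y z; split.
  by apply/teqP; exists 1%g, 0; rewrite shiftf_id.
move=> /teqP [s [a ->]]; apply/idP/idP.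
- move=> /teqP [t [b ->]]; apply/teqP; exists (t * s^-1)%g, (b - a).
  rewrite shiftf_comp -mulgA mulVg mulg1 addrC subrK //.
- move=> /teqP [t [b ->]]; apply/teqP; exists (t * s)%g, (a + b).
  by rewrite shiftf_comp.
Qed.

Lemma adm_shift (p l : nat) (A : {ffun 'I_l -> 'F_p}) s a :
  A \in admissible p (@Kgraph l) -> shiftf A (s, a) \in admissible p (@Kgraph l).
Proof.
move/admP=> H; apply/admP => i j ij; rewrite !ffunE /=.
have -> : A (s i) + a - (A (s j) + a) = A (s i) - A (s j).
  by rewrite opprD addrACA subrr addr0.
by apply: H; rewrite (inj_eq perm_inj).
Qed.

Lemma shift_inj (p l : nat) (A : {ffun 'I_l -> 'F_p}) :
  prime p -> (p %% 4 = 1)%N -> (2 <= l)%N ->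
  A \in admissible p (@Kgraph l) -> injective (shiftf A).
Proof.
move=> pr p4 l2 /admP H [s a] [t b] /ffunP E.
have Ainj : injective A.
  move=> i j Aij; apply/eqP; apply: contraT => ij.
  by have := H i j ij; rewrite Aij subrr /nzsq eqxx.
have ab : a = b.
  apply/eqP; apply: contraT => ab.
  have S : forall u : {perm 'I_l}, \sum_i A (u i) = \sum_i A i.
    by move=> u; rewrite [RHS](reindex_inj (@perm_inj _ u)).
  have : \sum_i shiftf A (s, a) i = \sum_i shiftf A (t, b) i.
    by apply: eq_bigr => i _; exact: E i.
  rewrite (eq_bigr (fun i => A (s i) + a)) => [|i _]; last by rewrite ffunE.
  rewrite [X in _ = X](eq_bigr (fun i => A (t i) + b)) => [|i _]; last by rewrite ffunE.
  rewrite !big_split /= !S !sumr_const card_ord => /addrI /eqP.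
  rewrite -subr_eq0 -mulrnBl -mulr_natr mulf_eq0 subr_eq0 (negbTE ab) /=.
  rewrite -(dvdn_pcharf (pchar_Fp pr)) => pl.
  have lp : (l <= p)%N.
    by have := leq_card A Ainj; rewrite card_ord card_Fp.
  have lep : l = p by apply/eqP; rewrite eqn_leq lp dvdn_leq //; lia.
  have [_ [z [z0 zns]]] := Fp_facts pr p4.
  have l0 : (0 < l)%N by lia.
  pose j0 : 'I_l := Ordinal l0.
  have : z + A j0 \in codom A.
    apply: (inj_card_onto Ainj); rewrite card_ord.
    by have := card_Fp pr; rewrite card_ord => ->; rewrite card_ord lep.
  move/codomP => [i Ai].
  have ij : i != j0.
    apply/eqP => e; move: Ai; rewrite e -{2}(add0r (A j0)) => /addIr ez.
    by rewrite ez eqxx in z0.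
  have := H i j0 ij; rewrite -Ai addrK => /andP [_ /existsP [w /eqP hw]].
  by have := zns w; rewrite hw eqxx.
have st : s = t.
  apply/permP => i; apply: Ainj; have := E i; rewrite !ffunE /= ab; exact: addIr.
by rewrite ab st.
Qed.

Lemma class_card (p l : nat) (A : {ffun 'I_l -> 'F_p}) :
  prime p -> (p %% 4 = 1)%N -> (2 <= l)%N ->
  A \in admissible p (@Kgraph l) ->
  #|[set B in admissible p (@Kgraph l) | tuple_equiv A B]| = (l`! * p)%N.
Proof.
move=> pr p4 l2 AD.
have -> : [set B in admissible p (@Kgraph l) | tuple_equiv A B] = shiftf A @: setT.
  apply/setP => B; rewrite in_set; apply/andP/imsetP.
  - by case=> _ /teqP [s [a ->]]; exists (s, a).
  - case=> [[s a] _ ->]; split; first exact: adm_shift.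
    by apply/teqP; exists s, a.
rewrite card_imset; last exact: shift_inj.
by rewrite cardsT card_prod card_Sn card_Fp.
Qed.

Lemma card_D (p l : nat) :
  prime p -> (p %% 4 = 1)%N -> (2 <= l)%N ->
  #|admissible p (@Kgraph l)| = (n_p p (@Kgraph l) * (l`! * p))%N.
Proof.
move=> pr p4 l2.
have eqi : {in admissible p (@Kgraph l) & &, equivalence_rel (@tuple_equiv p l)}.
  by move=> x y z _ _ _; exact: teq_equiv.
rewrite (card_partition (equivalence_partitionP eqi)).
rewrite /n_p -sum_nat_const; apply: eq_bigr => _ /imsetP [A AD ->].
exact: class_card.
Qed.

Lemma foldr_const2 (T : finType) (f : T -> nat) :
  (forall x, f x = 2%N) -> foldr muln 1%N [seq f x | x : T] = (2 ^ #|T|)%N.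
Proof.
move=> H; rewrite cardE /image_mem; elim: (enum T) => //= x s ->.
by rewrite H expnS.
Qed.

Lemma nzsq_sq (p : nat) (x y : 'F_p) : y != 0 -> x = y ^+ 2 -> nzsq x.
Proof.
move=> y0 ->; apply/andP; split; first by rewrite expf_eq0 negb_and y0 orbT.
by apply/existsP; exists y.
Qed.

Lemma Y0_card (p l : nat) :
  prime p -> (p %% 4 = 1)%N ->
  #|Y0 p l| = (#|admissible p (@Kgraph l)| * 2 ^ #|{: pairs_lt l}|)%N.
Proof.
move=> pr p4.
have [[c hc] _] := Fp_facts pr p4.
rewrite -sum1_card big_mkcond /=.
rewrite (_ : \sum_i _ = \sum_r \sum_y (if (r, y) \in Y0 p l then 1%N else 0%N)); last first.
  by rewrite pair_bigA; apply: eq_bigr => -[r y].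
rewrite -sum_nat_const [RHS]big_mkcond /=; apply: eq_bigr => r _.
rewrite -big_mkcond /= sum1dep_card.
case: (boolP (r \in admissible p (@Kgraph l))) => rD.
- move/admP: rD => H.
  pose F := fun ij : pairs_lt l =>
    [pred z : 'F_p | (r (val ij).1 - r (val ij).2 == z ^+ 2) && (z != 0)].
  rewrite (@eq_card _ _ (family F)); last first.
    move=> y; rewrite !inE; apply/forallP/familyP => Hy ij; have := Hy ij; by rewrite !inE.
  rewrite card_family foldr_const2 // => [[[i j] ji]] /=.
  have ij : i != j by rewrite neq_ltn ji orbT.
  have /andP [nz /existsP [w /eqP hw]] := H i j ij.
  have w0 : w != 0 by apply: contraNneq nz => w0; rewrite -hw w0 expr0n.
  rewrite (@eq_card _ _ (pred2 w (- w))); last first.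
    move=> z; rewrite !inE unfold_in /= -hw [w ^+ 2 == _]eq_sym eqf_sqr.
    case: eqP => [->|_] /=; first by rewrite w0.
    by case: eqP => [->|] //=; rewrite oppr_eq0 w0.
  rewrite card2; suff -> : w != - w by [].
  apply/eqP => ww.
  have : w *+ 2 == 0 by rewrite mulr2n {2}ww subrr.
  rewrite -mulr_natl mulf_eq0 (negbTE w0) orbF -(dvdn_pcharf (pchar_Fp pr)).
  move/dvdn_leq => /(_ isT) p2; have := prime_gt1 pr; lia.
- apply: eq_card0 => y; rewrite !inE; apply/negbTE; apply: contraNN rD => /forallP Hy.
  apply/admP => i j ij.
  case: (ltngtP i j) => [lt|lt|eq]; last by move: ij; rewrite (val_inj eq) eqxx.
  + have /andP [/eqP e y0] := Hy (exist _ (j, i) lt : pairs_lt l).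
    apply: (nzsq_sq (y := c * y (exist _ (j, i) lt))).
      rewrite mulf_eq0 negb_or y0 andbT; apply/eqP => c0; move: hc.
      by rewrite c0 expr0n /= => /eqP; rewrite eq_sym oppr_eq0 oner_eq0.
    by rewrite exprMn hc mulN1r -e /= opprB.
  + have /andP [/eqP e y0] := Hy (exist _ (i, j) lt : pairs_lt l).
    exact: nzsq_sq y0 e.
Qed.

Lemma sum_lt_min (l i : nat) : (\sum_(0 <= j < l) (j < i : nat))%N = minn i l.
Proof.
elim: l => [|l IH]; first by rewrite big_nil; lia.
rewrite big_nat_recr //= IH; case: (ltnP l i) => h /=; lia.
Qed.

Lemma card_pairs (l : nat) : #|{: pairs_lt l}| = (l * (l - 1) %/ 2)%N.
Proof.
rewrite card_sig.
have -> : #|[pred ij : 'I_l * 'I_l | (ij.2 < ij.1)%N]|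
    = (\sum_(ij : 'I_l * 'I_l | (ij.2 < ij.1)%N) 1)%N.
  by rewrite sum1dep_card; apply: eq_card => ij; rewrite inE.
rewrite -(pair_big_dep xpredT (fun i j : 'I_l => (j < i)%N) (fun _ _ => 1%N)) /=.
rewrite (eq_bigr (fun i : 'I_l => val i)) => [|i _]; last first.
  rewrite big_mkcond /= -(big_mkord xpredT (fun j => (j < i : nat))).
  by rewrite sum_lt_min; apply/minn_idPl/ltnW.
rewrite -(big_mkord xpredT (fun i => i)) bin2_sum bin2 divn2 subn1 //.
Qed.

Unset Implicit Arguments.
Theorem mainTheorem4 (p l : nat) :
  prime p -> (p %% 4 = 1)%N -> (2 <= l)%N ->
  ((@n_p p l (@Kgraph l))%:R : rat)
    = ((2 ^ (l * (l - 1) %/ 2))%N%:R)^-1 * ((l`!)%N%:R)^-1 * (p%:R)^-1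
      * (#|@Y0 p l|)%:R.
Proof.
move=> pr p4 l2.
rewrite (Y0_card l pr p4) (card_D pr p4 l2) card_pairs !natrM.
have h1 : (2 ^ (l * (l - 1) %/ 2))%N%:R != 0 :> rat by rewrite pnatr_eq0 expn_eq0.
have h2 : (l`!)%:R != 0 :> rat by rewrite pnatr_eq0 -lt0n fact_gt0.
have h3 : p%:R != 0 :> rat by rewrite pnatr_eq0 -lt0n prime_gt0.
field; rewrite h1 h2 h3 //.
Qed.
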